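(* Let $k\in\mathbb{N}$ and let $u=a_1\cdots a_n$ (with letters $a_i$ of a totally ordered finite alphabet $A$) be a word of minimal length within its $\sim_k$-class. Suppose the attributes $(x_i,y_i)$ of $u$ satisfy, for all positions $i<n$: if $(x_i,y_i)=(x_{i+1},y_{i+1})$ and $x_i+y_i=k+1$, then $a_i\le a_{i+1}$. Then $u$ is the shortlex normal form of its $\sim_k$-class.
   Context: $u\sim_k v$ iff $u,v$ have the same scattered subwords of length at most $k$. For words of equal length, $u$ is lexicographically smaller than $v$ if for some word $p$ and letters $a<b$, $pa$ is a prefix of $u$ and $pb$ a prefix of $v$. The shortlex normal form of the $\sim_k$-class of $u$ is the lexicographically smallest word among the shortest words $w$ with $w\sim_k u$. An X-ranker is a nonempty word over $\{\mathsf X_a : a\in A\}$, a Y-ranker a nonempty word over $\{\mathsf Y_a:a\in A\}$, length = word length. For a word $w$: $\mathsf X_a(w)$ is the smallest $a$-position, $r\mathsf X_a(w)$ the smallest $a$-position greater than $r(w)$; $\mathsf Y_a(w)$ the greatest $a$-position, $r\mathsf Y_a(w)$ the greatest $a$-position smaller than $r(w)$ (possibly undefined). The attribute of position $p$ of $u$ is $(x_p,y_p)$, $x_p$ (resp. $y_p$) the minimal length of an X-ranker (resp. Y-ranker) reaching $p$ in $u$. *)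

(* Defs.v *)
From mathcomp Require Import all_boot all_order.
Set Implicit Arguments. Unset Strict Implicit. Unset Printing Implicit Defensive.
Import Order.TTheory.

Section Words.
Context {d : Order.disp_t} {A : finOrderType d}.

Definition simk (k : nat) (u v : seq A) : Prop :=
  forall w : seq A, size w <= k -> subseq w u = subseq w v.

Definition lexlt (u v : seq A) : Prop :=
  exists (p : seq A) (a b : A) (s t : seq A),
    (a < b)%O /\ u = p ++ a :: s /\ v = p ++ b :: t.

Definition shortlex_nf (k : nat) (u w : seq A) : Prop :=
  [/\ simk k w u,
      (forall v, simk k v u -> size w <= size v) &
      (forall v, simk k v u -> size v = size w -> v <> w -> lexlt w v)].

(* Positions are 0-based: 0 <= p < size u. *)

(* smallest a-position >= lo *)
Definition findX (u : seq A) (a : A) (lo : nat) : option nat :=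
  let q := find (pred1 a) (drop lo u) in
  if lo + q < size u then Some (lo + q) else None.

(* greatest a-position < hi *)
Definition findY (u : seq A) (a : A) (hi : nat) : option nat :=
  let t := rev (take hi u) in
  let q := find (pred1 a) t in
  if q < size t then Some (size t - q.+1) else None.

(* evaluation of X-ranker X_{a1} ... X_{am} (represented by its letters a1..am),
   the first step looking at positions >= lo *)
Fixpoint xrank (u : seq A) (lo : nat) (s : seq A) : option nat :=
  match s with
  | [::] => None
  | a :: s' =>
      match findX u a lo with
      | None => None
      | Some p => if s' is [::] then Some p else xrank u p.+1 s'
      end
  end.

(* evaluation of Y-ranker Y_{a1} ... Y_{am}, first step looking at positions < hi *)
Fixpoint yrank (u : seq A) (hi : nat) (s : seq A) : option nat :=
  match s with
  | [::] => None
  | a :: s' =>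
      match findY u a hi with
      | None => None
      | Some p => if s' is [::] then Some p else yrank u p s'
      end
  end.

Definition xeval (u : seq A) (s : seq A) : option nat := xrank u 0 s.
Definition yeval (u : seq A) (s : seq A) : option nat := yrank u (size u) s.

Definition is_xattr (u : seq A) (p m : nat) : Prop :=
  (exists s, s <> [::] /\ size s = m /\ xeval u s = Some p) /\
  (forall s, s <> [::] -> xeval u s = Some p -> m <= size s).

Definition is_yattr (u : seq A) (p m : nat) : Prop :=
  (exists s, s <> [::] /\ size s = m /\ yeval u s = Some p) /\
  (forall s, s <> [::] -> yeval u s = Some p -> m <= size s).

End Words.

(* Main.v *)
Require Import Defs.
From mathcomp Require Import all_boot all_order zify.
From Stdlib Require Import Classical.
Set Implicit Arguments. Unset Strict Implicit. Unset Printing Implicit Defensive.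
Import Order.TTheory.


Section Gen.
Variable T : eqType.
Implicit Types s U V W x y : seq T.

Lemma subseq_split s U V : subseq s (U ++ V) ->
  exists s1 s2, [/\ s = s1 ++ s2, subseq s1 U & subseq s2 V].
Proof.
elim: U s => [|c U IH] s /=.
  by move=> H; exists [::], s; split => //; apply: sub0seq.
case: s => [|d s] /=.
  by move=> _; exists [::], [::]; split => //; apply: sub0seq.
case: eqP => [-> | ne] H.
  have [s1 [s2 [-> H1 H2]]] := IH _ H.
  by exists (c :: s1), s2; split => //=; rewrite eqxx.
have [s1 [s2 [E H1 H2]]] := IH _ H.
exists s1, s2; split => //.
exact: subseq_trans H1 (subseq_cons _ _).
Qed.

Lemma subseq_behead c d y V : subseq (c :: y) (d :: V) -> subseq y V.
Proof.
rewrite /=; case: eqP => // _ H.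
by apply: subseq_trans H; apply: subseq_cons.
Qed.

Lemma subseq_L3 x0 c y U V :
  subseq (rcons x0 c ++ y) (U ++ V) -> ~~ subseq (rcons x0 c) U ->
  subseq (c :: y) V.
Proof.
move=> /subseq_split [s1 [s2 [E H1 H2]]] Hn.
have [le|lt] := leqP (size s1) (size x0).
  have E2 : s2 = drop (size s1) x0 ++ c :: y.
    have := congr1 (drop (size s1)) E.
    rewrite (drop_size_cat s2 (erefl (size s1))) cat_rcons drop_cat => <-.
    case: ltnP => [_ //|ge].
    have -> : size s1 = size x0 by apply/eqP; rewrite eqn_leq le ge.
    by rewrite subnn drop0 drop_size.
  by apply: subseq_trans H2; rewrite E2; apply: suffix_subseq.
exfalso; move/negP: Hn; apply.
apply: subseq_trans H1.
have := congr1 (take (size (rcons x0 c))) E.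
rewrite (take_size_cat y (erefl _)) takel_cat; last by rewrite size_rcons.
move=> ->; exact: take_subseq.
Qed.

Lemma subseq_L4' s c R : subseq s (c :: R) -> ~~ subseq s R ->
  exists s0, s = c :: s0 /\ subseq s0 R.
Proof.
case: s => [|d s0] /=; first by rewrite sub0seq.
case: eqP => [-> H _|_ H /negP //]; by exists s0.
Qed.

Lemma subseq_L4 s L c : subseq s (rcons L c) -> ~~ subseq s L ->
  exists s0, s = rcons s0 c /\ subseq s0 L.
Proof.
rewrite -subseq_rev rev_rcons -(subseq_rev s L) => H1 H2.
have [s0 [E H]] := subseq_L4' H1 H2.
exists (rev s0); split; last by rewrite -subseq_rev revK.
by rewrite -rev_cons -E revK.
Qed.

Lemma subseq_L5 a0 b P W : subseq (rcons a0 b) (P ++ W) -> b \notin W ->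
  subseq (rcons a0 b) P.
Proof.
move=> /subseq_split [s1 [s2 [E H1 H2]]] Hb.
case/lastP: s2 E H2 => [|s2 e] E H2; first by rewrite E cats0.
exfalso; move: E; rewrite -rcons_cat => /rcons_inj [_ ee].
move/negP: Hb; apply; rewrite ee.
by apply: (mem_subseq H2); rewrite mem_rcons mem_head.
Qed.

Lemma subseq_L6 c y W V : subseq (c :: y) (W ++ V) -> c \notin W ->
  subseq (c :: y) V.
Proof.
elim: W => [//|d W IH] /=.
rewrite in_cons negb_or => H /andP [ne nW].
apply: IH nW; move: H; rewrite (negbTE ne) //.
Qed.

Lemma subseq_rcons2 s t c : subseq s t -> subseq (rcons s c) (rcons t c).
Proof. by move=> H; rewrite -!cats1; apply: cat_subseq H (subseq_refl _). Qed.

End Gen.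

Section Br.
Context {d : Order.disp_t} {A : finOrderType d}.
Implicit Types u w s : seq A.

Lemma findX_shift u a lo :
  findX u a lo = omap (addn lo) (findX (drop lo u) a 0).
Proof.
rewrite /findX drop0 add0n size_drop.
set q := find _ _.
by rewrite ltn_subRL; case: ifP.
Qed.

Lemma xrank_shift s u lo :
  xrank u lo s = omap (addn lo) (xrank (drop lo u) 0 s).
Proof.
elim: s u lo => [//|a s IH] u lo /=.
rewrite (findX_shift u a lo).
case: (findX (drop lo u) a 0) => [q|//] /=.
case: s IH => [//|a' s'] IH.
rewrite IH (IH (drop lo u)) drop_drop.
have -> : q.+1 + lo = (lo + q).+1 by lia.
case: (xrank _ 0 _) => [r|] //=.
congr Some; lia.
Qed.

Lemma findX0 u a :
  findX u a 0 = if a \in u then Some (index a u) else None.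
Proof.
by rewrite /findX drop0 add0n -index_mem.
Qed.

Lemma subseq_cons_take a s u n :
  subseq (a :: s) (take n u) =
  (index a u < n) && (a \in u) && subseq s (take (n - (index a u).+1) (drop (index a u).+1 u)).
Proof.
elim: u n => [|c u IH] n /=; first by rewrite in_nil andbF.
case: n => [|n] /=.
  by [].
rewrite in_cons [c == a]eq_sym.
case: eqP => [->|ne] /=.
  by rewrite subSS subn0 drop0.
by rewrite IH ltnS subSS.
Qed.

Lemma xeval_char u s p :
  xrank u 0 s = Some p <->
  [/\ s != [::], p < size u, subseq s (take p.+1 u) & ~~ subseq s (take p u)].
Proof.
elim: s u p => [|a s IH] u p /=.
  by split => // -[].
rewrite findX0.
case: ifP => au; last first.
  split => // -[_ _ H _]; move: H; rewrite subseq_cons_take au andbF //.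
rewrite !subseq_cons_take au !andbT.
set q := index a u.
have qlt : q < size u by rewrite index_mem.
case: s IH => [|a' s'] IH.
  rewrite !sub0seq !andbT; split.
    by move=> [<-]; rewrite ltnSn ltnn qlt.
  move=> [_ ltp H1 H2]; congr Some; apply/eqP; rewrite eqn_leq -ltnS H1 /=.
  by rewrite leqNgt.
rewrite xrank_shift.
split.
  case E: (xrank _ 0 _) => [r|] //= [<-].
  have [ne lt1 H1 H2] := (IH _ _).1 E.
  rewrite size_drop in lt1.
  split => //.
  - lia.
  - have -> : (q.+1 + r).+1 - q.+1 = r.+1 by lia.
    rewrite H1 andbT; lia.
  - have -> : q.+1 + r - q.+1 = r by lia.
    by rewrite (negbTE H2) andbF.
move=> [_ ltp /andP [qp H1] H2].
have qp' : q < p.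
  rewrite ltn_neqAle -ltnS qp andbT; apply/eqP => qe; move: H1.
  by rewrite qe subnn take0.
rewrite qp' /= in H2.
set r := p - q.+1 in H2.
have Hp : p = q.+1 + r by rewrite /r; lia.
have E : xrank (drop q.+1 u) 0 (a' :: s') = Some r.
  apply/IH; split => //.
    rewrite size_drop /r; lia.
  have <- : p.+1 - q.+1 = r.+1 by rewrite /r; lia.
  exact: H1.
by rewrite E /= Hp.
Qed.

Lemma findY_rev u a hi :
  findY u a hi = omap (fun q => size (take hi u) - q.+1) (findX (rev (take hi u)) a 0).
Proof.
rewrite /findY /findX drop0 add0n size_rev.
by case: ifP.
Qed.

Lemma yrank_rev s u hi :
  yrank u hi s =
  omap (fun r => size (take hi u) - r.+1) (xrank (rev (take hi u)) 0 s).
Proof.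
elim: s hi => [//|a s IH] hi /=.
rewrite findY_rev.
case E: (findX _ a 0) => [q|//] /=.
case: s IH => [//|a' s'] IH.
have qlt : q < size (take hi u).
  move: E; rewrite findX0; case: ifP => // H [<-].
  by rewrite -size_rev index_mem.
rewrite IH (xrank_shift _ (rev (take hi u)) q.+1).
set p := size (take hi u) - q.+1.
have Hp : p <= size (take hi u) by rewrite /p leq_subr.
have e1 : rev (take p u) = drop q.+1 (rev (take hi u)).
  rewrite drop_rev size_take_min -/p -take_min.
  congr (rev (take _ u)).
  move: Hp; rewrite /p !size_take_min; lia.
rewrite e1.
case: (xrank _ 0 _) => [r|] //=.
congr Some.
rewrite size_take_min.
move: Hp; rewrite /p !size_take_min; lia.
Qed.

Lemma yeval_char u s p :
  yeval u s = Some p <->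
  [/\ s != [::], p < size u, subseq (rev s) (drop p u) & ~~ subseq (rev s) (drop p.+1 u)].
Proof.
rewrite /yeval yrank_rev take_size.
split.
  case E: (xrank _ 0 _) => [r|] //= [<-].
  have [ne lt H1 H2] := (xeval_char _ _ _).1 E.
  rewrite size_rev in lt.
  split => //.
  - lia.
  - rewrite -subseq_rev revK rev_drop.
    have -> : size u - (size u - r.+1) = r.+1 by lia.
    exact: H1.
  - rewrite -subseq_rev revK rev_drop.
    have -> : size u - (size u - r.+1).+1 = r by lia.
    exact: H2.
move=> [ne lt H1 H2].
have E : xrank (rev u) 0 s = Some (size u - p.+1).
  apply/xeval_char; split => //.
  - rewrite size_rev; lia.
  - rewrite -subseq_rev revK rev_drop in H1.
    have e : size u - p = (size u - p.+1).+1 by lia.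
    by rewrite -e.
  - rewrite -subseq_rev revK rev_drop in H2.
    have e : size u - p.+1 = (size u - p.+1) by [].
    by [].
rewrite E /=; congr Some; lia.
Qed.

End Br.

Lemma ex_min_nat (P : nat -> Prop) : (exists n, P n) ->
  exists n, P n /\ forall m, P m -> n <= m.
Proof.
move=> [n Pn].
suff H : forall N n, n <= N -> P n -> exists n, P n /\ forall m, P m -> n <= m.
  exact: (H n n (leqnn n) Pn).
elim=> [|N IH] n0.
  rewrite leqn0 => /eqP -> P0; exists 0; split => // m _.
move=> le Pn0.
case: (classic (exists m, m < n0 /\ P m)) => [[m [lt Pm]]|nex].
  apply: (IH m) => //; move: lt le; lia.
exists n0; split => // m Pm.
rewrite leqNgt; apply/negP => lt; apply: nex; by exists m.
Qed.

Section Mn.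
Context {d : Order.disp_t} {A : finOrderType d}.
Implicit Types u v w s L R P Q S T : seq A.

Definition XpL L (c : A) s := subseq s (rcons L c) && ~~ subseq s L.
Definition YpR (c : A) R s := subseq s (c :: R) && ~~ subseq s R.
Definition LBX L c n := forall s, XpL L c s -> n <= size s.
Definition LBY c R n := forall s, YpR c R s -> n <= size s.

Lemma existsX L c : exists m, (exists s, XpL L c s /\ size s = m) /\ LBX L c m.
Proof.
have W : exists m, exists s, XpL L c s /\ size s = m.
  exists (size (rcons L c)), (rcons L c); split => //.
  rewrite /XpL subseq_refl /=; apply/negP => /size_subseq; rewrite size_rcons ltnn //.
have [m [[s [H1 H2]] H3]] := ex_min_nat W.
exists m; split; first by exists s.
by move=> s' Hs'; apply: H3; exists s'.
Qed.

Lemma existsY c R : exists m, (exists s, YpR c R s /\ size s = m) /\ LBY c R m.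
Proof.
have W : exists m, exists s, YpR c R s /\ size s = m.
  exists (size (c :: R)), (c :: R); split => //.
  rewrite /YpR subseq_refl /=; apply/negP => /size_subseq; rewrite /= ltnn //.
have [m [[s [H1 H2]] H3]] := ex_min_nat W.
exists m; split; first by exists s.
by move=> s' Hs'; apply: H3; exists s'.
Qed.

Lemma del_sim k L c R X Y : LBX L c X -> LBY c R Y -> k.+1 < X + Y ->
  simk k (L ++ R) (L ++ c :: R).
Proof.
move=> HX HY Hk w Hw.
apply/idP/idP => H.
  apply: subseq_trans H _; apply: cat_subseq (subseq_refl _) (subseq_cons _ _).
move: H; rewrite -cat_rcons => /subseq_split [s1 [s2 [Ew H1 H2]]].
rewrite Ew in Hw *.
case H1L: (subseq s1 L); first by apply: cat_subseq.
have [s0 [E0 H0]] := subseq_L4 H1 (negbT H1L).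
have HXs : X <= size s1 by apply: HX; rewrite /XpL H1 H1L.
case H2R: (subseq (c :: s2) R).
  by rewrite E0 cat_rcons; apply: cat_subseq.
have HYs : Y <= size (c :: s2).
  by apply: HY; rewrite /YpR H2R /= eqxx H2.
exfalso; move: Hw HXs HYs Hk; rewrite size_cat E0 size_rcons /=; lia.
Qed.

Lemma min_sum k u v L c R X Y :
  (forall w, simk k w u -> size u <= size w) ->
  simk k v u -> size v = size u -> v = L ++ c :: R ->
  LBX L c X -> LBY c R Y -> X + Y <= k.+1.
Proof.
move=> H1 Hvu Hsz Ev HX HY.
rewrite leqNgt; apply/negP => lt.
have Hd := del_sim HX HY lt.
have : size u <= size (L ++ R).
  apply: H1 => w Hw; rewrite Hd // -Ev; exact: Hvu.
by rewrite -Hsz Ev !size_cat /= addnS ltnn.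
Qed.

Lemma XpL_nil L c s : XpL L c s -> s != [::].
Proof. by case: s => // /andP [_]; rewrite sub0seq. Qed.

Lemma YpR_nil c R s : YpR c R s -> s != [::].
Proof. by case: s => // /andP [_]; rewrite sub0seq. Qed.

Lemma xeval_XpL u L c R s : u = L ++ c :: R ->
  (s != [::] /\ xeval u s = Some (size L)) <-> XpL L c s.
Proof.
move=> Eu; rewrite /xeval xeval_char.
have e1 : take (size L).+1 u = rcons L c.
  by rewrite Eu -cat_rcons (take_size_cat _ (size_rcons L c)).
have e2 : take (size L) u = L by rewrite Eu (take_size_cat _ (erefl (size L))).
rewrite e1 e2; split.
  by move=> [_ [_ _ H1 H2]]; rewrite /XpL H1 H2.
move=> H; have ne := XpL_nil H; move: H => /andP [H1 H2].
by split => //; split => //; rewrite Eu size_cat /= addnS ltnS leq_addr.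
Qed.

Lemma yeval_YpR u L c R s : u = L ++ c :: R ->
  (s != [::] /\ yeval u s = Some (size L)) <-> YpR c R (rev s).
Proof.
move=> Eu; rewrite yeval_char.
have e1 : drop (size L) u = c :: R by rewrite Eu (drop_size_cat _ (erefl (size L))).
have e2 : drop (size L).+1 u = R.
  by rewrite Eu -cat_rcons (drop_size_cat _ (size_rcons L c)).
rewrite e1 e2; split.
  by move=> [_ [_ _ H1 H2]]; rewrite /YpR H1 H2.
move=> H; have ne := YpR_nil H; move: H => /andP [H1 H2].
split; last split => //.
- by apply: contraNN ne => /eqP ->.
- by apply: contraNN ne => /eqP ->.
- by rewrite Eu size_cat /= addnS ltnS leq_addr.
Qed.

Lemma is_xattr_of u L c R m : u = L ++ c :: R ->
  (exists s, XpL L c s /\ size s = m) -> LBX L c m -> is_xattr u (size L) m.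
Proof.
move=> Eu [s [Hs Hsz]] HL; split.
  exists s; split; first exact/eqP/(XpL_nil Hs).
  by split => //; apply ((xeval_XpL _ Eu).2 Hs).2.
move=> s' ne E; apply: HL; apply/(xeval_XpL _ Eu); split => //; exact/eqP.
Qed.

Lemma is_yattr_of u L c R m : u = L ++ c :: R ->
  (exists s, YpR c R s /\ size s = m) -> LBY c R m -> is_yattr u (size L) m.
Proof.
move=> Eu [s [Hs Hsz]] HL; split.
  exists (rev s); split.
    by move: (YpR_nil Hs); case/lastP: s {Hs Hsz} => // s x; rewrite rev_rcons.
  split; first by rewrite size_rev.
  by apply: ((yeval_YpR _ Eu).2 _).2; rewrite revK.
move=> s' ne E; rewrite -size_rev; apply: HL; apply/(yeval_YpR _ Eu); split => //; exact/eqP.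
Qed.

Lemma simk_sym k u v : simk k v u -> simk k u v.
Proof. by move=> H w Hw; rewrite H. Qed.

Lemma F1 k u v P a S b T ab bb :
  simk k v u -> u = P ++ a :: S -> v = P ++ b :: T -> a != b ->
  XpL P b ab -> YpR b T bb -> size ab + size bb <= k.+1 -> subseq bb S.
Proof.
move=> Hs Eu Ev ne /andP [Ha1 Ha2] /andP [Hb1 Hb2] Hk.
have [r0 [Er0 Hr0]] := subseq_L4 Ha1 Ha2.
have [z [Ez Hz]] := subseq_L4' Hb1 Hb2.
have HW : subseq (r0 ++ bb) u.
  rewrite -Hs; last by move: Hk; rewrite Er0 size_rcons size_cat; lia.
  by rewrite Ev; apply: cat_subseq.
move: HW; rewrite Eu Ez -cat_rcons => /subseq_L3.
rewrite -Er0 => /(_ Ha2) /=.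
by rewrite eq_sym (negbTE ne).
Qed.

Lemma cross k u v P a S b T aa ab bb :
  simk k v u -> u = P ++ a :: S -> v = P ++ b :: T -> a != b ->
  XpL P a aa -> XpL P b ab -> YpR b T bb -> size ab + size bb <= k.+1 ->
  k.+1 <= size aa + size bb.
Proof.
move=> Hs Eu Ev ne Haa Hab Hbb Hk.
have HbS := F1 Hs Eu Ev ne Hab Hbb Hk.
rewrite leqNgt; apply/negP => lt.
move: Haa Hbb => /andP [Ha1 Ha2] /andP [Hb1 Hb2].
have HW : subseq (aa ++ bb) v.
  rewrite Hs; last by rewrite size_cat -ltnS.
  by rewrite Eu -cat_rcons; apply: cat_subseq.
have [r [Er _]] := subseq_L4 Ha1 Ha2.
move: HW; rewrite Ev Er => /subseq_L3; rewrite -Er => /(_ Ha2) /subseq_behead.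
by rewrite (negbTE Hb2).
Qed.

Lemma midX k u v P b T bb x L Q c R :
  simk k v u -> v = P ++ b :: T -> YpR b T bb -> x + size bb <= k.+1 ->
  u = L ++ c :: R -> L = P ++ Q -> subseq bb R -> LBX L c x.
Proof.
move=> Hs Ev /andP [Hb1 Hb2] Hk Eu EL HbR al /andP [H1 H2].
rewrite leqNgt; apply/negP => lt.
have [a0 [Ea0 _]] := subseq_L4 H1 H2.
have HW : subseq (al ++ bb) v.
  rewrite Hs; last by rewrite size_cat; lia.
  by rewrite Eu -cat_rcons; apply: cat_subseq.
have HP : ~~ subseq al P.
  apply: contraNN H2 => H; rewrite EL; exact: subseq_trans H (prefix_subseq _ _).
move: HW; rewrite Ev Ea0 => /subseq_L3; rewrite -Ea0 => /(_ HP) /subseq_behead.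
by rewrite (negbTE Hb2).
Qed.

Lemma midY k u v P a S b T aa ab y Q c R :
  simk k v u -> u = P ++ a :: S -> v = P ++ b :: T ->
  XpL P a aa -> XpL P b ab -> size aa + y <= k.+1 -> size ab + y <= k.+1 ->
  S = Q ++ c :: R -> b \notin a :: Q -> LBY c R y.
Proof.
move=> Hs Eu Ev /andP [Ha1 Ha2] /andP [Hb1 Hb2] Hk1 Hk2 ES Hb be /andP [H1 H2].
rewrite leqNgt; apply/negP => lt.
have HW : subseq (aa ++ be) v.
  rewrite Hs; last by rewrite size_cat; lia.
  rewrite Eu -cat_rcons; apply: cat_subseq Ha1 _.
  by rewrite ES; apply: subseq_trans H1 (suffix_subseq _ _).
have [r [Er _]] := subseq_L4 Ha1 Ha2.
move: HW; rewrite Ev Er => /subseq_L3; rewrite -Er => /(_ Ha2) /subseq_behead HbT.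
have HW' : subseq (ab ++ be) u.
  rewrite -Hs; last by rewrite size_cat; lia.
  by rewrite Ev -cat_rcons; apply: cat_subseq.
have [r0 [Er0 _]] := subseq_L4 Hb1 Hb2.
have HL : ~~ subseq ab (P ++ a :: Q).
  apply: contraNN Hb2 => H; rewrite Er0; apply: (subseq_L5 (W := a :: Q)) => //.
  by rewrite -Er0.
move: HW'; rewrite Eu ES -cat_cons catA Er0 => /subseq_L3.
rewrite -Er0 => /(_ HL) /subseq_behead.
by rewrite (negbTE H2).
Qed.

Lemma jX k u v P b T bb x L Q R :
  simk k v u -> v = P ++ b :: T -> YpR b T bb -> LBX P b x -> x + size bb <= k.+1 ->
  u = L ++ b :: R -> L = P ++ Q -> subseq bb (b :: R) -> LBX L b x.
Proof.
move=> Hs Ev /andP [Hb1 Hb2] HX Hk Eu EL HbR al /andP [H1 H2].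
rewrite leqNgt; apply/negP => lt.
have [a0 [Ea0 Ha0]] := subseq_L4 H1 H2.
have HW : subseq (a0 ++ bb) v.
  rewrite Hs; last by move: lt; rewrite Ea0 size_cat size_rcons; lia.
  by rewrite Eu; apply: cat_subseq.
case Ha0P: (subseq a0 P).
  have : x <= size al.
    apply: HX; rewrite /XpL Ea0 subseq_rcons2 //=.
    rewrite -Ea0; apply: contraNN H2 => H; rewrite EL.
    exact: subseq_trans H (prefix_subseq _ _).
  by rewrite leqNgt lt.
case/lastP: a0 Ea0 Ha0 HW Ha0P => [|a00 e] _ _; first by rewrite sub0seq.
move=> HW Hn; move: HW; rewrite Ev => /subseq_L3 /(_ (negbT Hn)) /subseq_behead.
by rewrite (negbTE Hb2).
Qed.

End Mn.

Section Mx.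
Context {d : Order.disp_t} {A : finOrderType d}.
Implicit Types u v w s L R P Q S T : seq A.

Lemma AT k u L c R x y :
  (forall w, simk k w u -> size u <= size w) -> u = L ++ c :: R ->
  LBX L c x -> LBY c R y -> x + y = k.+1 ->
  is_xattr u (size L) x /\ is_yattr u (size L) y.
Proof.
move=> H1 Eu HX HY Hk.
have [m [[s [Hs Hsz]] Hm]] := existsX L c.
have [m' [[s' [Hs' Hsz']] Hm']] := existsY c R.
have l1 : x <= m by rewrite -Hsz; apply: HX.
have l2 : y <= m' by rewrite -Hsz'; apply: HY.
have l3 := min_sum H1 (fun w _ => erefl) erefl Eu Hm Hm'.
have e1 : m = x by lia.
have e2 : m' = y by lia.
split.
  by apply: (is_xattr_of Eu); [exists s; rewrite Hsz e1 | rewrite -e1].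
by apply: (is_yattr_of Eu); [exists s'; rewrite Hsz' e2 | rewrite -e2].
Qed.

Lemma first_diff u v : size u = size v -> u != v ->
  exists P a b S T, [/\ a != b, u = P ++ a :: S & v = P ++ b :: T].
Proof.
elim: u v => [|a u IH] [|b v] //= [Hs] Hne.
case: (eqVneq a b) => [eab|nab].
  subst b.
  have Hne' : u != v by apply: contraNN Hne => /eqP ->.
  have [P [a' [b' [S [T [ne Eu Ev]]]]]] := IH v Hs Hne'.
  by exists (a :: P), a', b', S, T; rewrite Eu Ev.
by exists [::], a, b, u, v.
Qed.

End Mx.

Theorem theorem14 (d : Order.disp_t) (A : finOrderType d) (k : nat) (u : seq A) :
  (forall v : seq A, simk k v u -> size u <= size v) ->
  (forall (p s : seq A) (a b : A) (x1 y1 x2 y2 : nat),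
     u = p ++ a :: b :: s ->
     is_xattr u (size p) x1 -> is_yattr u (size p) y1 ->
     is_xattr u (size p).+1 x2 -> is_yattr u (size p).+1 y2 ->
     (x1, y1) = (x2, y2) -> x1 + y1 = k.+1 ->
     (a <= b)%O) ->
  shortlex_nf k u u.
Proof.
move=> H1 H2; split.
- by move=> w _.
- exact: H1.
move=> v Hvu Hsz Hne.
have Hne' : u != v by apply/eqP => E; apply: Hne; rewrite E.
have [P [a [b [S [T [ab Eu Ev]]]]]] := first_diff (esym Hsz) Hne'.
have [x [[aa [Haa Esa]] HXa]] := existsX P a.
have [y [[ba [Hba Esb]] HYa]] := existsY a S.
have [x' [[ab' [Hab Esab]] HXb]] := existsX P b.
have [y' [[bb [Hbb Esbb]] HYb]] := existsY b T.
have Su : x + y <= k.+1 := min_sum H1 (fun w _ => erefl) erefl Eu HXa HYa.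
have Sv : x' + y' <= k.+1 := min_sum H1 Hvu Hsz Ev HXb HYb.
have C1 : k.+1 <= x + y'.
  rewrite -Esa -Esbb; apply: (cross Hvu Eu Ev ab Haa Hab Hbb); by rewrite Esab Esbb.
have C2 : k.+1 <= x' + y.
  rewrite -Esab -Esb; apply: (cross (simk_sym Hvu) Ev Eu _ Hab Haa Hba).
    by rewrite eq_sym.
  by rewrite Esa Esb.
have ex : x' = x by lia.
have ey : y' = y by lia.
have Hk : x + y = k.+1 by lia.
have HbS : subseq bb S.
  apply: (F1 Hvu Eu Ev ab Hab Hbb); by rewrite Esab Esbb.
have [z [Ez _]] : exists z, bb = b :: z /\ subseq z T.
  by move: Hbb => /andP [h1 h2]; apply: subseq_L4'.
have bS : b \in S by apply: (mem_subseq HbS); rewrite Ez mem_head.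
set s1 := take (index b S) S.
set S2 := drop (index b S).+1 S.
have ES : S = s1 ++ b :: S2.
  by rewrite /s1 /S2 -{1}(cat_take_drop (index b S) S) (drop_nth b) ?index_mem // nth_index.
have nb : b \notin s1 by rewrite /s1 in_take // ltnn.
have HbS2 : subseq bb (b :: S2).
  by rewrite Ez; apply: (subseq_L6 (W := s1)) => //; rewrite -Ez -ES.
have nba : b \notin [:: a] by rewrite mem_seq1 eq_sym.
have BA : forall B1 c B2, a :: s1 = B1 ++ c :: B2 ->
    is_xattr u (size (P ++ B1)) x /\ is_yattr u (size (P ++ B1)) y.
  move=> [|a' Q] c B2 /=.
    move=> _; rewrite cats0.
    exact: (AT H1 Eu HXa HYa Hk).
  move=> [<- Es1].
  have Eu' : u = (P ++ a :: Q) ++ c :: (B2 ++ b :: S2).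
    by rewrite Eu ES Es1 -catA cat_cons -catA.
  apply: (AT H1 Eu').
  - apply: (midX Hvu Ev Hbb _ Eu' (erefl _)).
      by rewrite Esbb ey Hk.
    exact: subseq_trans HbS2 (suffix_subseq _ _).
  - apply: (midY (Q := Q) Hvu Eu Ev Haa Hab).
    + by rewrite Esa Hk.
    + by rewrite Esab ex Hk.
    + by rewrite ES Es1 -catA.
    + rewrite in_cons negb_or eq_sym ab /=.
      apply: contraNN nb; rewrite Es1 mem_cat => ->. by [].
  - exact: Hk.
have JA : is_xattr u (size (P ++ a :: s1)) x /\ is_yattr u (size (P ++ a :: s1)) y.
  have Eu' : u = (P ++ a :: s1) ++ b :: S2 by rewrite Eu ES -catA.
  apply: (AT H1 Eu').
  - apply: (jX Hvu Ev Hbb _ _ Eu' (erefl _) HbS2).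
      by rewrite -ex.
    by rewrite Esbb ey Hk.
  - apply: (midY (Q := s1) Hvu Eu Ev Haa Hab).
    + by rewrite Esa Hk.
    + by rewrite Esab ex Hk.
    + exact: ES.
    + by rewrite in_cons negb_or eq_sym ab.
  - exact: Hk.
have Hpos : forall B1 c B2, a :: s1 = B1 ++ c :: B2 ->
    u = (P ++ B1) ++ c :: (B2 ++ b :: S2).
  move=> B1 c B2 E; rewrite Eu ES -catA; congr (P ++ _); by rewrite -[a :: (s1 ++ _)]cat_cons E -catA.
have CH : forall B1 c B2, a :: s1 = B1 ++ c :: B2 -> (a <= c)%O.
  elim/last_ind => [|B0 e IH] c B2.
    by move=> [->].
  rewrite cat_rcons => E.
  apply: le_trans (IH e (c :: B2) E) _.
  have [X1 Y1] := BA _ _ _ E.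
  have E' : a :: s1 = rcons B0 e ++ c :: B2 by rewrite cat_rcons.
  have [X2 Y2] := BA _ _ _ E'.
  rewrite size_cat size_rcons addnS -size_cat in X2 Y2.
  apply: (H2 (P ++ B0) (B2 ++ b :: S2) e c x y x y) => //.
  by rewrite (Hpos _ _ _ E).
have E0 : a :: s1 = belast a s1 ++ [:: last a s1] by rewrite cats1 lastI.
have le1 := CH _ _ _ E0.
have le2 : (last a s1 <= b)%O.
  have [X1 Y1] := BA _ _ _ E0.
  have [X2 Y2] := JA.
  have es : size (P ++ a :: s1) = (size (P ++ belast a s1)).+1.
    by rewrite !size_cat /= size_belast addnS.
  rewrite es in X2 Y2.
  apply: (H2 (P ++ belast a s1) S2 (last a s1) b x y x y) => //.
  by rewrite (Hpos _ _ _ E0).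
exists P, a, b, S, T; split => //.
rewrite lt_neqAle (le_trans le1 le2) andbT.
by move: ab; rewrite eq_sym.
Qed.
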